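(* Let $M^\star\in\mathbb{R}^{n\times n}$ with $M^\star\succeq0$ and $r^\star=\operatorname{rank}(M^\star)\ge1$, and suppose $X\in\mathbb{R}^{n\times r}$ satisfies $0<\|XX^T-M^\star\|_F\le\rho\,\lambda_{r^\star}(M^\star)$ with $\rho\le1/\sqrt2$. Define the incidence angle $\theta\in[0,\pi/2]$ by \[ \cos\theta=\max_{Y\in\mathbb{R}^{n\times r}}\frac{\langle XX^T-M^\star,XY^T+YX^T\rangle}{\|XX^T-M^\star\|_F\,\|XY^T+YX^T\|_F}. \] Then \[ \sin\theta=\frac{\|(I-XX^\dagger)M^\star(I-XX^\dagger)\|_F}{\|XX^T-M^\star\|_F}\le\frac1{\sqrt2}\frac{\rho}{\sqrt{1-\rho^2}}, \] where $\dagger$ denotes the Moore–Penrose pseudoinverse.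
   Context: Eigenvalues are ordered decreasingly, so $\lambda_{r^\star}(M^\star)$ is the smallest nonzero eigenvalue of $M^\star$. $\langle A,B\rangle=\operatorname{tr}(A^TB)$. The maximum is over $Y$ with $XY^T+YX^T\ne0$. *)

(* Defs.v *)
From HB Require Import structures.
From mathcomp Require Import all_boot all_order all_algebra.
From mathcomp Require Import all_classical all_reals all_analysis.
Set Implicit Arguments. Unset Strict Implicit. Unset Printing Implicit Defensive.
Import Order.TTheory GRing.Theory Num.Theory.
Local Open Scope ring_scope.
Local Open Scope classical_set_scope.

Definition mxinner (R : realType) (m n : nat) (A B : 'M[R]_(m, n)) : R :=
  \tr (A^T *m B).

Definition frob (R : realType) (m n : nat) (A : 'M[R]_(m, n)) : R :=
  Num.sqrt (\sum_i \sum_j A i j ^+ 2).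

Definition psd (R : realType) (n : nat) (M : 'M[R]_n) : Prop :=
  M^T = M /\ forall v : 'rV[R]_n, 0 <= (v *m M *m v^T) 0 0.

Definition is_MP_pinv (R : realType) (m n : nat) (A : 'M[R]_(m, n))
  (B : 'M[R]_(n, m)) : Prop :=
  [/\ A *m B *m A = A, B *m A *m B = B,
      (A *m B)^T = A *m B & (B *m A)^T = B *m A].

(* the Moore--Penrose pseudoinverse (it exists and is unique) *)
Definition mp_pinv (R : realType) (m n : nat) (A : 'M[R]_(m, n)) : 'M[R]_(n, m) :=
  xget 0 [set B | is_MP_pinv A B].

(* smallest nonzero eigenvalue; for PSD M of rank r* this is lambda_{r*}(M) *)
Definition lambda_min_nz (R : realType) (n : nat) (M : 'M[R]_n) : R :=
  inf [set a : R | eigenvalue M a /\ a != 0].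

Definition incidence_cos (R : realType) (n r : nat) (Ms : 'M[R]_n)
  (X : 'M[R]_(n, r)) : R :=
  sup [set c : R | exists Y : 'M[R]_(n, r),
         X *m Y^T + Y *m X^T != 0 /\
         c = mxinner (X *m X^T - Ms) (X *m Y^T + Y *m X^T) /
             (frob (X *m X^T - Ms) * frob (X *m Y^T + Y *m X^T))].

Definition incidence_angle (R : realType) (n r : nat) (Ms : 'M[R]_n)
  (X : 'M[R]_(n, r)) : R :=
  acos (incidence_cos Ms X).

(* Main.v *)
Require Import Defs.
From HB Require Import structures.
From mathcomp Require Import all_boot all_order all_algebra.
From mathcomp Require Import all_classical all_reals all_analysis.
From mathcomp Require Import complex spectral sesquilinear.
From mathcomp.algebra_tactics Require Import ring lra.
Import Order.TTheory GRing.Theory Num.Theory.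
Set Implicit Arguments. Unset Strict Implicit. Unset Printing Implicit Defensive.
Local Open Scope ring_scope.

Section Frob.
Variable R : realType.
Lemma mul_self_ge0 (x : R) : 0 <= x * x. Proof. by rewrite -expr2 sqr_ge0. Qed.

Lemma mxinnerE m n (A B : 'M[R]_(m, n)) :
  mxinner A B = \sum_i \sum_j A i j * B i j.
Proof.
rewrite /mxinner /mxtrace exchange_big /=; apply: eq_bigr => j _.
by rewrite mxE; apply: eq_bigr => i _; rewrite mxE.
Qed.

Lemma mxinnerC m n (A B : 'M[R]_(m, n)) : mxinner A B = mxinner B A.
Proof.
by rewrite !mxinnerE; apply: eq_bigr => i _; apply: eq_bigr => j _; rewrite mulrC.
Qed.

Lemma mxinnerDl m n (A B C : 'M[R]_(m, n)) :
  mxinner (A + B) C = mxinner A C + mxinner B C.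
Proof.
rewrite !mxinnerE -big_split; apply: eq_bigr => i _.
by rewrite -big_split; apply: eq_bigr => j _; rewrite mxE mulrDl.
Qed.

Lemma mxinnerDr m n (A B C : 'M[R]_(m, n)) :
  mxinner C (A + B) = mxinner C A + mxinner C B.
Proof. by rewrite mxinnerC mxinnerDl !(mxinnerC C). Qed.

Lemma mxinnerNl m n (A C : 'M[R]_(m, n)) :
  mxinner (- A) C = - mxinner A C.
Proof.
rewrite !mxinnerE -sumrN; apply: eq_bigr => i _.
by rewrite -sumrN; apply: eq_bigr => j _; rewrite mxE mulNr.
Qed.

Lemma mxinnerNr m n (A C : 'M[R]_(m, n)) :
  mxinner C (- A) = - mxinner C A.
Proof. by rewrite mxinnerC mxinnerNl mxinnerC. Qed.

Lemma mxinnerZl m n a (A C : 'M[R]_(m, n)) :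
  mxinner (a *: A) C = a * mxinner A C.
Proof.
rewrite !mxinnerE mulr_sumr; apply: eq_bigr => i _.
by rewrite mulr_sumr; apply: eq_bigr => j _; rewrite mxE mulrA.
Qed.

Lemma mxinnerZr m n a (A C : 'M[R]_(m, n)) :
  mxinner C (a *: A) = a * mxinner C A.
Proof. by rewrite mxinnerC mxinnerZl mxinnerC. Qed.

Lemma mxinner_ge0 m n (A : 'M[R]_(m, n)) : 0 <= mxinner A A.
Proof.
by rewrite mxinnerE; apply: sumr_ge0 => i _; apply: sumr_ge0 => j _; exact: mul_self_ge0.
Qed.

Lemma mxinner_eq0 m n (A : 'M[R]_(m, n)) : mxinner A A = 0 -> A = 0.
Proof.
rewrite mxinnerE => H; apply/matrixP => i j; rewrite mxE.
have H1 := fun i => @psumr_eq0P _ _ _ _ (fun i _ => sumr_ge0 _ (fun j _ => mul_self_ge0 (A i j))) H i.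
have := @psumr_eq0P _ _ _ _ (fun j _ => mul_self_ge0 (A i j)) (H1 i isT) j isT.
by move/eqP; rewrite mulf_eq0 orbb => /eqP.
Qed.

Lemma frobE m n (A : 'M[R]_(m, n)) : frob A = Num.sqrt (mxinner A A).
Proof.
by rewrite /frob mxinnerE.
Qed.

Lemma frob_ge0 m n (A : 'M[R]_(m, n)) : 0 <= frob A.
Proof. by rewrite frobE sqrtr_ge0. Qed.

Lemma frob_sq m n (A : 'M[R]_(m, n)) : frob A ^+ 2 = mxinner A A.
Proof. by rewrite frobE sqr_sqrtr // mxinner_ge0. Qed.

Lemma frobN m n (A : 'M[R]_(m, n)) : frob (- A) = frob A.
Proof. by rewrite !frobE mxinnerNl mxinnerNr opprK. Qed.

Lemma mxinner_tr m n (A B : 'M[R]_(m, n)) : mxinner A^T B^T = mxinner A B.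
Proof.
rewrite !mxinnerE exchange_big /=; apply: eq_bigr => i _.
by apply: eq_bigr => j _; rewrite !mxE.
Qed.

Lemma frob_tr m n (A : 'M[R]_(m, n)) : frob A^T = frob A.
Proof. by rewrite !frobE mxinner_tr. Qed.

Lemma mxinner_CS m n (A B : 'M[R]_(m, n)) : mxinner A B <= frob A * frob B.
Proof.
have [B0|Bn0] := eqVneq (mxinner B B) 0.
  rewrite (mxinner_eq0 B0) mxinnerE big1; first by rewrite mulr_ge0 ?frob_ge0.
  by move=> i _; rewrite big1 // => j _; rewrite mxE mulr0.
have Bp : 0 < mxinner B B by rewrite lt_def Bn0 mxinner_ge0.
set t := mxinner A B / mxinner B B.
have H := mxinner_ge0 (A - t *: B).
rewrite mxinnerDl !mxinnerDr !mxinnerNl !mxinnerNr !mxinnerZl (mxinnerC _ (t *: B)) !mxinnerZl in H.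
rewrite (mxinnerC B A) in H.
have H2 : mxinner A B ^+ 2 <= mxinner A A * mxinner B B.
  have e : t * mxinner B B = mxinner A B by rewrite /t mulfVK.
  have : 0 <= (mxinner A A - t * mxinner A B) * mxinner B B.
    apply: mulr_ge0; last exact: ltW.
    by rewrite mxinnerZr e in H; lra.
  by rewrite mulrBl -mulrA (mulrC (mxinner A B)) mulrA e -expr2 subr_ge0.
have [Hab|Hab] := leP (mxinner A B) 0.
  by apply: le_trans Hab _; apply: mulr_ge0; apply: frob_ge0.
rewrite -(@ler_pXn2r _ 2) //; last by rewrite nnegrE mulr_ge0 ?frob_ge0.
  by rewrite exprMn !frob_sq.
by rewrite nnegrE ltW.
Qed.


Lemma mxinner_trE m n (A B : 'M[R]_(m, n)) : mxinner A B = \tr (A^T *m B).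
Proof. by []. Qed.

Lemma sq_projR m n (A : 'M[R]_(m, n)) (P : 'M[R]_n) :
  P^T = P -> P *m P = P -> mxinner (A *m P) (A *m P) = \tr (A^T *m A *m P).
Proof.
move=> Ps Pi; rewrite mxinner_trE trmx_mul Ps [in LHS]mxtrace_mulC [in LHS]mulmxA.
by rewrite -[A *m P *m P]mulmxA Pi [in LHS]mxtrace_mulC mulmxA.
Qed.

Lemma compl_proj n (P : 'M[R]_n) : P^T = P -> P *m P = P ->
  (1%:M - P)^T = 1%:M - P /\ (1%:M - P) *m (1%:M - P) = 1%:M - P.
Proof.
move=> Ps Pi; split; first by rewrite linearB /= trmx1 Ps.
by rewrite mulmxBl mul1mx mulmxBr mulmx1 Pi subrr subr0.
Qed.

Lemma sq_splitR m n (A : 'M[R]_(m, n)) (P : 'M[R]_n) :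
  P^T = P -> P *m P = P ->
  mxinner A A = mxinner (A *m P) (A *m P) + mxinner (A *m (1%:M - P)) (A *m (1%:M - P)).
Proof.
move=> Ps Pi; have [Qs Qi] := compl_proj Ps Pi.
rewrite !sq_projR // -mxtraceD -mulmxDr addrC subrK mulmx1.
by [].
Qed.

Lemma sq_splitL m n (A : 'M[R]_(m, n)) (P : 'M[R]_m) :
  P^T = P -> P *m P = P ->
  mxinner A A = mxinner (P *m A) (P *m A) + mxinner ((1%:M - P) *m A) ((1%:M - P) *m A).
Proof.
move=> Ps Pi; have [Qs Qi] := compl_proj Ps Pi.
rewrite -mxinner_tr (sq_splitR _ Ps Pi) -(mxinner_tr (P *m A)).
by rewrite -(mxinner_tr ((1%:M - P) *m A)) !trmx_mul Ps Qs.
Qed.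

Lemma tr_rows m n (A : 'M[R]_(m, n)) (N : 'M[R]_n) :
  \tr (A *m N *m A^T) = \sum_i (row i A *m N *m (row i A)^T) 0 0.
Proof.
rewrite /mxtrace; apply: eq_bigr => i _; rewrite !mxE.
apply: eq_bigr => k _; rewrite !mxE; congr (_ * _).
by apply: eq_bigr => l _; rewrite !mxE.
Qed.

Lemma quad_delta n (C : 'M[R]_n) i j :
  ((delta_mx 0 i : 'rV[R]_n) *m C *m (delta_mx 0 j : 'rV[R]_n)^T) 0 0 = C i j.
Proof.
rewrite -rowE trmx_delta -colE !mxE //.
Qed.

Lemma quad_delta_mx n (C : 'M[R]_n) i j :
  ((delta_mx 0 i : 'rV[R]_n) *m C *m (delta_mx 0 j : 'rV[R]_n)^T) = (C i j)%:M.
Proof.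
rewrite -rowE trmx_delta -colE.
by apply/matrixP => a b; rewrite !ord1 !mxE eqxx mulr1n.
Qed.

Lemma psd_offdiag n (C : 'M[R]_n) i j : C^T = C ->
  (forall v : 'rV[R]_n, 0 <= (v *m C *m v^T) 0 0) ->
  C i j ^+ 2 <= C i i * C j j.
Proof.
move=> Cs Cp.
have Cji : C j i = C i j by rewrite -[in LHS]Cs mxE.
pose e (k : 'I_n) : 'rV[R]_n := delta_mx 0 k.
pose q (s t : R) := ((s *: e i + t *: e j) *m C *m (s *: e i + t *: e j)^T) 0 0.
have qE s t : q s t = s * s * C i i + s * t * C i j + t * s * C j i + t * t * C j j.
  rewrite /q /e linearD /= !linearZ /= !mulmxDl !mulmxDr.
  rewrite -!scalemxAl -!scalemxAr !quad_delta_mx !mxE /= !mulr1n.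
  by rewrite !mulrA !addrA.
have q1 := Cp ((C j j) *: e i + (- C i j) *: e j).
have q2 := Cp ((- C i j) *: e i + (C i i) *: e j).
have q3 := Cp (1 *: e i + (- C i j) *: e j).
rewrite -/(q _ _) qE Cji in q1; rewrite -/(q _ _) qE Cji in q2.
rewrite -/(q _ _) qE Cji in q3.
have Cii : 0 <= C i i by have := Cp (e i); rewrite /e quad_delta_mx mxE eqxx mulr1n.
have Cjj : 0 <= C j j by have := Cp (e j); rewrite /e quad_delta_mx mxE eqxx mulr1n.
rewrite -subr_ge0.
have [Hjj|Hjj] := eqVneq (C j j) 0.
  have [Hii|Hii] := eqVneq (C i i) 0.
    rewrite Hii Hjj in q3 *; nra.
  have Hp : 0 < C i i by rewrite lt_def Hii Cii.
  have : 0 <= C i i * (C i i * C j j - C i j ^+ 2) by nra.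
  by rewrite pmulr_rge0.
have Hp : 0 < C j j by rewrite lt_def Hjj Cjj.
have : 0 <= C j j * (C i i * C j j - C i j ^+ 2) by nra.
by rewrite pmulr_rge0.
Qed.


Lemma psd_tr n (C : 'M[R]_n) : C^T = C ->
  (forall v : 'rV[R]_n, 0 <= (v *m C *m v^T) 0 0) -> frob C <= \tr C.
Proof.
move=> Cs Cp.
have Cd i : 0 <= C i i.
  by have := Cp (delta_mx 0 i); rewrite quad_delta_mx mxE eqxx mulr1n.
have tr0 : 0 <= \tr C by rewrite /mxtrace; apply: sumr_ge0 => i _.
have H : mxinner C C <= \tr C ^+ 2.
  rewrite mxinnerE /mxtrace expr2 big_distrl /=; apply: ler_sum => i _.
  rewrite big_distrr /=; apply: ler_sum => j _.
  by rewrite -expr2; apply: psd_offdiag.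
rewrite frobE -(ger0_norm tr0) -sqrtr_sqr.
exact: ler_wsqrtr.
Qed.

Lemma gram_unit k m (B : 'M[R]_(k, m)) : row_free B -> B *m B^T \in unitmx.
Proof.
move=> Bf; rewrite -row_free_unit -kermx_eq0; apply/eqP/row_matrixP => i.
rewrite row0; set u := row i _.
have uG : u *m (B *m B^T) = 0 by apply/sub_kermxP; rewrite row_sub.
have : mxinner (u *m B) (u *m B) = 0.
  rewrite mxinner_trE mxtrace_mulC trmx_mul !mulmxA -(mulmxA u B) uG.
  by rewrite mul0mx mxtrace0.
move=> /mxinner_eq0 /eqP; rewrite mulmx_free_eq0 //.
by move/eqP.
Qed.

Lemma mp_of_factor m n k (C : 'M[R]_(m, k)) (F : 'M[R]_(k, n)) :
  C^T *m C \in unitmx -> F *m F^T \in unitmx ->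
  is_MP_pinv (C *m F) (F^T *m invmx (F *m F^T) *m invmx (C^T *m C) *m C^T).
Proof.
move=> G1u G2u.
set iG1 := invmx (C^T *m C); set iG2 := invmx (F *m F^T).
have iG1s : iG1^T = iG1 by rewrite /iG1 trmx_inv trmx_mul trmxK.
have iG2s : iG2^T = iG2 by rewrite /iG2 trmx_inv trmx_mul trmxK.
have AB : C *m F *m (F^T *m iG2 *m iG1 *m C^T) = C *m iG1 *m C^T.
  rewrite !mulmxA -(mulmxA C F F^T) -(mulmxA C (F *m F^T) iG2) mulmxV //.
  by rewrite mulmx1.
have BA : (F^T *m iG2 *m iG1 *m C^T) *m (C *m F) = F^T *m iG2 *m F.
  rewrite !mulmxA -(mulmxA _ C^T C) -(mulmxA (F^T *m iG2) iG1 _) mulVmx //.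
  by rewrite mulmx1.
split.
- rewrite AB !mulmxA -(mulmxA _ C^T C) -(mulmxA C iG1 _) mulVmx //.
  by rewrite mulmx1.
- rewrite BA !mulmxA -(mulmxA (F^T *m iG2) F F^T).
  by rewrite -(mulmxA (F^T *m iG2) (F *m F^T) iG2) mulmxV // mulmx1.
- by rewrite AB !trmx_mul trmxK iG1s mulmxA.
- by rewrite BA !trmx_mul trmxK iG2s mulmxA.
Qed.

Lemma mp_exists m n (A : 'M[R]_(m, n)) : exists B, is_MP_pinv A B.
Proof.
have G2u := gram_unit (row_base_free A).
have G1u : (col_base A)^T *m (col_base A) \in unitmx.
  have := @gram_unit _ _ (col_base A)^T; rewrite trmxK; apply.
  by rewrite /row_free mxrank_tr; exact: col_base_full.
have := mp_of_factor G1u G2u; rewrite mulmx_base => H.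
by eexists; exact: H.
Qed.

End Frob.

Section Spec.
Variable R : realType.
Local Notation toC := (real_complex R).
Local Notation conjC := Num.Def.conjC.

Lemma psd_sq_ge (n : nat) (M : 'M[R]_n) (l : R) :
  M^T = M -> (forall a, eigenvalue M a -> 0 <= a * (a - l)) ->
  forall v : 'rV[R]_n, 0 <= (v *m (M *m M - l *: M) *m v^T) 0 0.
Proof.
move=> Msym Heig v.
pose Mc := map_mx toC M.
have Mch : Mc \is hermsymmx.
  apply: realsym_hermsym.
    apply/is_hermitianmxP; rewrite expr0 scale1r map_mx_id //.
    by rewrite /Mc map_trmx Msym.
  by apply/mxOverP => i j; rewrite !mxE; apply/complex_realP; exists (M i j).
have /orthomx_spectralP Mdec := hermitian_normalmx Mch.
have Uu := spectral_unitarymx Mc.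
have dreal := hermitian_spectral_diag_real Mch.
move: Mdec Uu dreal.
set U := spectralmx Mc. set d := spectral_diag Mc.
move=> Mdec Uu dreal.
have UUt := unitarymxP Uu.
rewrite invmx_unitary // in Mdec.
have row1_neq0 : forall j : 'I_n, row j (1%:M : 'M[R[i]]_n) != 0.
  move=> j; apply/eqP => /rowP /(_ j); rewrite !mxE eqxx /= => /eqP.
  by rewrite oner_eq0.
have rowD : forall j : 'I_n, row j (diag_mx d) = d 0 j *: row j 1%:M.
  move=> j; apply/rowP => k; rewrite !mxE.
  by case: eqP => [->|_]; rewrite ?mulr1 ?mulr0.
have de : forall j, 0 <= d 0 j * (d 0 j - toC l).
  move=> j; have dj : d 0 j \is Num.real by exact: (mxOverP dreal).
  rewrite -(RRe_real dj); set a := complex.Re (d 0 j).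
  have : eigenvalue M a.
    rewrite eigenvalue_root_char -(fmorph_root toC) map_char_poly.
    rewrite -eigenvalue_root_char.
    apply/eigenvalueP; exists (row j U).
      have -> : map_mx toC M = Mc by [].
      rewrite (_ : _ *: row j U = d 0 j *: row j U); last first.
        by congr (_ *: _); exact: RRe_real.
      rewrite Mdec !mulmxA -row_mul UUt -row_mul mul1mx.
      by rewrite rowD -scalemxAl -row_mul mul1mx.
    apply/eqP => rj0; move: (row1_neq0 j); rewrite -UUt row_mul rj0 mul0mx.
    by rewrite eqxx.
  move=> /Heig; rewrite -ler0c => H; apply: le_trans H _.
  by rewrite rmorphM rmorphB.
pose vc := map_mx toC v.
have vcr : (vc ^t conjC)%sesqui = vc^T.
  apply/matrixP => i k; rewrite !mxE.
  by apply: conj_Creal; apply/complex_realP; exists (v k i).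
rewrite -ler0c.
have -> : toC ((v *m (M *m M - l *: M) *m v^T) 0 0)
   = (vc *m (Mc *m Mc - toC l *: Mc) *m (vc ^t conjC)%sesqui) 0 0.
  transitivity ((map_mx toC (v *m (M *m M - l *: M) *m v^T)) 0 0).
    by rewrite [in RHS]mxE.
  by rewrite vcr /vc /Mc !map_mxM map_mxB map_mxM map_mxZ map_trmx.
pose w := vc *m (U ^t conjC)%sesqui.
have wt : (w ^t conjC)%sesqui = U *m (vc ^t conjC)%sesqui.
  by rewrite /w trmx_mul map_mxM trmxCK.
pose e := \row_k (d 0 k * (d 0 k - toC l)).
have -> : vc *m (Mc *m Mc - toC l *: Mc) *m (vc ^t conjC)%sesqui
   = w *m diag_mx e *m (w ^t conjC)%sesqui.
  rewrite wt /w.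
  have -> : diag_mx e = diag_mx d *m diag_mx d - toC l *: diag_mx d.
    apply/matrixP => i k; rewrite mul_mx_diag !mxE.
    by case: eqP => [->|_]; rewrite ?mulr1n ?mulr0n ?mul0r ?mulr0 ?subrr // mulrBr (mulrC (toC l)).
  have -> : Mc *m Mc - toC l *: Mc = (U ^t conjC)%sesqui *m
      (diag_mx d *m diag_mx d - toC l *: diag_mx d) *m U.
    rewrite mulmxBr mulmxBl -scalemxAr -scalemxAl [Mc]Mdec.
    congr (_ - _); rewrite !mulmxA.
    by rewrite -(mulmxA _ U (U ^t conjC)%sesqui) UUt mulmx1.
  by rewrite !mulmxA.
rewrite mul_mx_diag mxE; apply: sumr_ge0 => k _; rewrite !mxE.
by rewrite mulrAC; apply: mulr_ge0 (mul_conjC_ge0 _) (de k).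
Qed.
End Spec.

Lemma final_ineq (R : realType) (e c0 l rho b2 : R) : 0 < e -> 0 <= c0 -> 0 <= l -> 0 <= b2 ->
  e <= rho * l -> rho <= 1 / Num.sqrt 2 -> c0 ^+ 2 + 2 * b2 <= e ^+ 2 ->
  l * c0 <= c0 ^+ 2 + b2 ->
  c0 / e <= 1 / Num.sqrt 2 * (rho / Num.sqrt (1 - rho ^+ 2)).
Proof.
move=> ep c0p lp b2p erl rs eb lb.
have s2p : 0 < Num.sqrt 2 :> R by rewrite sqrtr_gt0; lra.
have s2sq : Num.sqrt 2 ^+ 2 = 2 :> R by rewrite sqr_sqrtr //; lra.
have rhop : 0 < rho.
  rewrite ltNge; apply/negP => rn.
  have : rho * l <= 0 by rewrite mulr_le0_ge0.
  lra.
have rs2 : rho * Num.sqrt 2 <= 1.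
  by move: rs; rewrite ler_pdivlMr // mul1r.
have rho2 : rho ^+ 2 * 2 <= 1.
  have h0 : 0 <= rho * Num.sqrt 2 by rewrite mulr_ge0 //; lra.
  have h : (rho * Num.sqrt 2) ^+ 2 <= 1.
    rewrite expr2; set x := rho * Num.sqrt 2 in h0 rs2 *; nra.
  by rewrite exprMn s2sq in h.
have c0e : c0 <= e.
  have : c0 ^+ 2 <= e ^+ 2 by lra.
  by rewrite ler_pXn2r // ?nnegrE; lra.
have k1 : 2 * e * c0 <= rho * (e ^+ 2 + c0 ^+ 2).
  have h1 : e * c0 <= rho * l * c0 by apply: ler_wpM2r.
  have h2 : 2 * l * c0 <= e ^+ 2 + c0 ^+ 2 by lra.
  have h3 := ler_wpM2l (ltW rhop) h2.
  lra.
have k2 : c0 <= rho * e.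
  have h1 : rho * (e ^+ 2 + c0 ^+ 2) <= rho * (2 * e ^+ 2).
    apply: ler_wpM2l; [exact: ltW | lra].
  have : 2 * e * c0 <= 2 * e * (rho * e) by lra.
  by rewrite ler_pM2l //; lra.
have k3 : c0 * (2 - rho ^+ 2) <= rho * e.
  have h1 : (rho * c0) * c0 <= (rho * c0) * (rho * e).
    by apply: ler_wpM2l => //; rewrite mulr_ge0 //; lra.
  have : e * (c0 * (2 - rho ^+ 2)) <= e * (rho * e) by lra.
  by rewrite ler_pM2l.
have sp : 0 < Num.sqrt (1 - rho ^+ 2) by rewrite sqrtr_gt0; lra.
have ssq : Num.sqrt (1 - rho ^+ 2) ^+ 2 = 1 - rho ^+ 2 by rewrite sqr_sqrtr //; lra.
set s := Num.sqrt (1 - rho ^+ 2) in sp ssq *.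
set s2 := Num.sqrt 2 in s2p s2sq rs rs2 *.
have up : 0 < s2 * s by rewrite mulr_gt0.
have usq : (s2 * s) ^+ 2 = 2 * (1 - rho ^+ 2) by rewrite exprMn s2sq ssq.
have ule : s2 * s <= 2 - rho ^+ 2.
  set u := s2 * s in up usq *.
  rewrite leNgt; apply/negP => H.
  have H1 : (2 - rho ^+ 2) * (2 - rho ^+ 2) < u * u.
    by apply: ltr_pM => //; lra.
  rewrite expr2 in usq; nra.
have -> : 1 / s2 * (rho / s) = rho / (s2 * s).
  by rewrite mul1r invfM mulrCA.
rewrite ler_pdivrMr // mulrAC ler_pdivlMr //.
have : c0 * (s2 * s) <= c0 * (2 - rho ^+ 2) by apply: ler_wpM2l.
lra.
Qed.

Lemma mx_id4 (R : realType) n (E a b c : 'M[R]_n) :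
  E - (E - a - b + c) = (a - 2^-1 *: c) + (b - 2^-1 *: c).
Proof. by apply/matrixP => i j; rewrite !mxE; lra. Qed.

Unset Implicit Arguments.
Set Strict Implicit.

Theorem lemma19 (R : realType) (n r : nat) (Ms : 'M[R]_n) (X : 'M[R]_(n, r))
  (rho : R) :
  psd Ms -> (1 <= \rank Ms)%N ->
  0 < frob (X *m X^T - Ms) ->
  frob (X *m X^T - Ms) <= rho * lambda_min_nz Ms ->
  rho <= 1 / Num.sqrt 2 ->
  let theta := incidence_angle Ms X in
  let P := 1%:M - X *m mp_pinv X in
  sin theta = frob (P *m Ms *m P) / frob (X *m X^T - Ms) /\
  sin theta <= 1 / Num.sqrt 2 * (rho / Num.sqrt (1 - rho ^+ 2)).
Proof.
move=> [Msym Mq] _ epos ebound rhob theta P.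
rewrite /theta /P /incidence_angle /incidence_cos; clear theta P.
set E := X *m X^T - Ms.
have Esym : E^T = E by rewrite /E linearB /= trmx_mul trmxK Msym.
set Xp := mp_pinv X.
have [MP1 MP2 MP3 MP4] : is_MP_pinv X Xp by apply: (xgetPex 0 (mp_exists X)).
set Q := X *m Xp.
have Qs : Q^T = Q := MP3.
have QX : Q *m X = X := MP1.
set P := 1%:M - Q.
have PX : P *m X = 0 by rewrite /P mulmxBl mul1mx QX subrr.
have Ps : P^T = P by rewrite /P linearB /= trmx1 Qs.
have XtP : X^T *m P = 0 by rewrite -Ps -trmx_mul PX trmx0.
have QQ : Q *m Q = Q by rewrite /Q mulmxA MP1.
have PP : P *m P = P.
  by rewrite /P mulmxBl mul1mx mulmxBr mulmx1 QQ subrr subr0.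
have QP : 1%:M - P = Q by rewrite /P subKr.
have Pdef : P = 1%:M - Q by [].
have Qdef : Q = X *m Xp by [].
have Edef : E = X *m X^T - Ms by [].
have XXpX : X *m Xp *m X = X := MP1.
clearbody P Q E Xp.
set Pe := P *m E *m P.
have PEP : Pe = - (P *m Ms *m P).
  by rewrite /Pe Edef mulmxBr mulmxBl !mulmxA PX !mul0mx sub0r.
have PeT : Pe^T = Pe by rewrite /Pe !trmx_mul Ps Esym mulmxA.
have PeX : Pe *m X = 0 by rewrite /Pe -mulmxA PX mulmx0.
have XtPe : X^T *m Pe = 0 by rewrite /Pe !mulmxA XtP !mul0mx.
have orth : forall Y : 'M[R]_(n, r), mxinner Pe (X *m Y^T + Y *m X^T) = 0.
  move=> Y; rewrite mxinnerDr !mxinner_trE PeT mulmxA PeX mul0mx mxtrace0 add0r.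
  by rewrite mxtrace_mulC -mulmxA XtPe mulmx0 mxtrace0.
set Et := E - Pe.
set Y0 := E *m Xp^T - 2^-1 *: (Q *m E *m Xp^T).
have EtT : Et = X *m Y0^T + Y0 *m X^T.
  have Y0T : Y0^T = Xp *m E - 2^-1 *: (Xp *m E *m Q).
    by rewrite /Y0 linearB linearZ /= !trmx_mul trmxK Esym Qs mulmxA.
  have XY : X *m Y0^T = Q *m E - 2^-1 *: (Q *m E *m Q).
    by rewrite Y0T mulmxBr -scalemxAr !mulmxA -Qdef.
  have YX : Y0 *m X^T = E *m Q - 2^-1 *: (Q *m E *m Q).
    rewrite /Y0 mulmxBl -scalemxAl -!mulmxA -trmx_mul -Qdef Qs.
    by rewrite !mulmxA.
  rewrite XY YX /Et /Pe Pdef.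
  have -> : (1%:M - Q) *m E *m (1%:M - Q) = E - Q *m E - E *m Q + Q *m E *m Q.
    rewrite mulmxBl mul1mx mulmxBl !mulmxBr !mulmx1.
    by move: (E *m Q) (Q *m E) (Q *m E *m Q) => a b c; apply/matrixP => i j; rewrite !mxE; lra.
  exact: mx_id4.
have EtE : E = Et + Pe by rewrite /Et subrK.
have PeDef : Pe = P *m E *m P by [].
clearbody Et Y0 Pe.
rewrite -Edef in epos ebound.
have frob0 : forall m k, frob (0 : 'M[R]_(m, k)) = 0.
  by move=> m k; rewrite frobE mxinnerE big1 ?sqrtr0 // => i _; rewrite big1 // => j _; rewrite mxE mul0r.
have innerET : forall Y, mxinner E (X *m Y^T + Y *m X^T) = mxinner Et (X *m Y^T + Y *m X^T).
  by move=> Y; rewrite {1}EtE mxinnerDl orth addr0.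
have hPeEt : mxinner Pe Et = 0 by rewrite EtT orth.
have Pyth : frob E ^+ 2 = frob Et ^+ 2 + frob Pe ^+ 2.
  rewrite !frob_sq [in LHS]EtE mxinnerDl !mxinnerDr (mxinnerC Et Pe) hPeEt.
  by rewrite addr0 add0r.
set S := (X in sup X).
have cE : sup S = frob Et / frob E.
  have ubS : ubound S (frob Et / frob E).
    move=> x [Y [Zn0 ->]]; set Z := X *m Y^T + Y *m X^T in Zn0 *.
    have Zp : 0 < frob Z.
      rewrite lt_def frob_ge0 andbT; apply: contra Zn0 => /eqP Z0.
      by apply/eqP/mxinner_eq0; rewrite -frob_sq Z0 expr2 mulr0.
    rewrite innerET ler_pdivrMr ?mulr_gt0 // mulrA divfK ?gt_eqF //.
    exact: mxinner_CS.
  have hub : has_ubound S by exists (frob Et / frob E).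
  have [Et0|Etn0] := eqVneq Et 0.
    rewrite Et0 frob0 mul0r in ubS *.
    have [Sne|S0] := pselect (S !=set0)%classic.
      apply/le_anti; rewrite ge_sup //=.
      case: Sne => x Sx; have := ub_le_sup hub Sx.
      move: Sx => [Y [_ ->]]; rewrite innerET Et0.
      by rewrite mxinnerC mxinner_trE mulmx0 mxtrace0 mul0r.
    have -> : S = set0.
      by apply/seteqP; split => x // Sx; apply: S0; exists x.
    exact: sup0.
  have fEtp : 0 < frob Et.
    rewrite lt_def frob_ge0 andbT; apply: contra Etn0 => /eqP Z0.
    by apply/eqP/mxinner_eq0; rewrite -frob_sq Z0 expr2 mulr0.
  have ES : S (frob Et / frob E).
    exists Y0; split; first by rewrite -EtT.
    rewrite innerET -EtT -frob_sq; field.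
    by rewrite !gt_eqF.
  apply/le_anti; rewrite ge_sup //=; last by exists (frob Et / frob E).
  exact: ub_le_sup.
have Etle : frob Et <= frob E.
  have := frob_ge0 Et; have := frob_ge0 Pe; have := frob_ge0 E; nra.
have part1 : sin (acos (sup S)) = frob (P *m Ms *m P) / frob E.
  rewrite cE sin_acos; last first.
    have h0 : 0 <= frob Et / frob E by rewrite divr_ge0 ?frob_ge0.
    have h1 : frob Et / frob E <= 1 by rewrite ler_pdivrMr // mul1r.
    by apply/andP; split; lra.
  have e2 : frob E ^+ 2 != 0 by rewrite expf_neq0 // gt_eqF.
  have -> : 1 - (frob Et / frob E) ^+ 2 = (frob Pe / frob E) ^+ 2.
    rewrite !expr_div_n (_ : frob Pe ^+ 2 = frob E ^+ 2 - frob Et ^+ 2).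
      by rewrite mulrBl divff.
    by rewrite Pyth; lra.
  by rewrite sqrtr_sqr ger0_norm ?divr_ge0 ?frob_ge0 // PEP frobN.
split; first exact: part1.
rewrite part1.
rewrite /lambda_min_nz in ebound *; set SS := (X in inf X) in ebound *.
have eig_ge0 : forall a, eigenvalue Ms a -> 0 <= a.
  move=> a /eigenvalueP [v vM vn0].
  have := Mq v; rewrite vM -scalemxAl mxE.
  have vv : (v *m v^T) 0 0 = mxinner v^T v^T.
    by rewrite mxinner_trE trmxK /mxtrace big_ord1.
  have vp : 0 < (v *m v^T) 0 0.
    rewrite vv lt_def mxinner_ge0 andbT; apply: contra vn0 => /eqP h.
    by have := mxinner_eq0 h => /(congr1 trmx); rewrite trmxK trmx0 => ->.
  by rewrite pmulr_lge0.
have SSlb : lbound SS 0 by move=> a [/eig_ge0].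
have l0 : 0 <= inf SS.
  have [Sne|S0] := pselect (SS !=set0)%classic; first exact: lb_le_inf.
  have -> : SS = set0.
    by apply/seteqP; split => x // Sx; apply: S0; exists x.
  by rewrite inf0.
have eigH : forall a, eigenvalue Ms a -> 0 <= a * (a - inf SS).
  move=> a ea; have [->|an0] := eqVneq a 0; first by rewrite mul0r.
  apply: mulr_ge0; first exact: eig_ge0.
  by rewrite subr_ge0; apply: ge_inf; [exists 0 | split].
have Cpsd : forall v : 'rV[R]_n, 0 <= (v *m (P *m Ms *m P) *m v^T) 0 0.
  by move=> v; have := Mq (v *m P); rewrite trmx_mul Ps !mulmxA.
have Csym : (P *m Ms *m P)^T = P *m Ms *m P by rewrite !trmx_mul Ps Msym mulmxA.
have trC := psd_tr Csym Cpsd.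
have key : inf SS * \tr (P *m Ms *m P) <= mxinner (Ms *m P) (Ms *m P).
  have h2 : 0 <= \tr (P *m (Ms *m Ms - inf SS *: Ms) *m P^T).
    by rewrite tr_rows; apply: sumr_ge0 => i _; apply: psd_sq_ge.
  rewrite Ps mulmxBr mulmxBl linearB /= -scalemxAr -scalemxAl linearZ /= subr_ge0 in h2.
  by rewrite mxinner_trE trmx_mul Ps Msym !mulmxA; rewrite !mulmxA in h2.
set b2 := mxinner (Q *m Ms *m P) (Q *m Ms *m P).
have split1 : mxinner (Ms *m P) (Ms *m P) = frob (P *m Ms *m P) ^+ 2 + b2.
  by rewrite (sq_splitL (Ms *m P) Ps PP) QP frob_sq /b2 !mulmxA.
have QEP : Q *m (E *m P) = - (Q *m Ms *m P).
  by rewrite Edef mulmxBl mulmxBr -!mulmxA XtP !mulmx0 sub0r.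
have PEQt : (P *m (E *m Q))^T = Q *m (E *m P).
  by rewrite !trmx_mul Qs Esym Ps mulmxA.
have F1 : frob (P *m Ms *m P) ^+ 2 + 2 * b2 <= frob E ^+ 2.
  rewrite !frob_sq (sq_splitR E Ps PP) (sq_splitL (E *m P) Ps PP).
  rewrite (sq_splitL (E *m (1%:M - P)) Ps PP) !QP.
  rewrite -(mxinner_tr (P *m (E *m Q))) PEQt QEP mxinnerNl mxinnerNr opprK.
  rewrite mulmxA -PeDef PEP mxinnerNl mxinnerNr opprK -/b2.
  have := mxinner_ge0 (Q *m (E *m Q)); lra.
apply: (final_ineq (l := inf SS) (b2 := b2)) => //; [exact: frob_ge0 | exact: mxinner_ge0 |].
have h : inf SS * frob (P *m Ms *m P) <= inf SS * \tr (P *m Ms *m P).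
  exact: ler_wpM2l.
rewrite split1 in key; lra.


Qed.
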